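(* In the setting described in the context, there exists an integer matrix $B = \begin{pmatrix} a_1 & b_1 \\ a_2 & b_2 \end{pmatrix} \in \mathbb{Z}^{2\times 2}$ such that $\rho_1^{a_1}\rho_2^{a_2} = \mathbf{1} = \rho_1^{b_1}\rho_2^{b_2}$ and $\det(B) = n$. Such a matrix is unique up to right multiplication by $\mathrm{SL}_2(\mathbb{Z})$.
   Context: Let $\Bbbk$ be algebraically closed of characteristic $0$, $R=\Bbbk[X_1,X_2,X_3]$, and $G\le \mathrm{SL}_3(\Bbbk)$ a finite abelian group of order $n$ acting on $R$ by linear change of variables, such that the skew-group algebra $R\ast G$ admits a higher preprojective grading (standing assumption). Decompose the natural representation of $G$ on $\Bbbk^3$ as $\rho=\rho_1\oplus\rho_2\oplus\rho_3$ into one-dimensional characters; these are elements of the character group $\hat G=\mathrm{Hom}(G,\Bbbk^* )$ (with multiplication of characters), and $\mathbf{1}$ denotes the trivial character. *)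

(* Defs.v *)
From HB Require Import structures.
From mathcomp Require Import all_boot all_order all_algebra all_fingroup all_solvable mxrepresentation.
Set Implicit Arguments. Unset Strict Implicit. Unset Printing Implicit Defensive.
Import GRing.Theory Num.Theory.
Local Open Scope ring_scope.

Definition lin_char (F : fieldType) (gT : finGroupType) (G : {set gT})
  (rho : gT -> F) : Prop :=
  {in G &, forall x y, rho (x * y)%g = rho x * rho y} /\ {in G, forall x, rho x != 0}.

Definition diag3 (F : fieldType) (a b c : F) : 'M[F]_3 :=
  diag_mx (\row_(i < 3) nth 0 [:: a; b; c] i).

Definition col_kills (F : fieldType) (gT : finGroupType) (G : {set gT})
  (rho1 rho2 : gT -> F) (B : 'M[int]_2) : Prop :=
  forall j : 'I_2, {in G, forall g, rho1 g ^ (B 0 j) * rho2 g ^ (B 1 j) = 1}.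

(* Main.v *)
Require Import Defs.
From HB Require Import structures.
From mathcomp Require Import all_boot all_order all_algebra all_fingroup all_solvable mxrepresentation.
From mathcomp Require Import zify ring.
From Stdlib Require Import ClassicalDescription.
Import GRing.Theory Num.Theory.
Local Open Scope ring_scope.

Definition pb (P : Prop) : bool := if excluded_middle_informative P then true else false.
Lemma pbP (P : Prop) : reflect P (pb P).
Proof. by rewrite /pb; case: excluded_middle_informative => h; constructor. Qed.

Lemma card_le_orth (F : fieldType) (I J : finType) (P : {pred I}) (Q : {pred J})
  (f : I -> J -> F) (f' : J -> I -> F) (k : F) : k != 0 ->
  (forall i i', i \in P -> i' \in P -> \sum_(j in Q) f i j * f' j i' = (i == i')%:R * k) ->
  (#|P| <= #|Q|)%N.
Proof.
move=> k0 H.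
pose A : 'M[F]_(#|P|, #|Q|) := \matrix_(i, j) f (enum_val i) (enum_val j).
pose B : 'M[F]_(#|Q|, #|P|) := \matrix_(j, i) f' (enum_val j) (enum_val i).
have AB : A *m B = k%:M.
  apply/matrixP=> i i'; rewrite !mxE.
  under eq_bigr do rewrite !mxE.
  rewrite -(big_enum_val (fun j => f (enum_val i) j * f' j (enum_val i'))).
  rewrite H ?enum_valP // (inj_eq enum_val_inj).
  by case: (i == i'); rewrite ?mul1r ?mul0r.
have <- : \rank (k%:M : 'M[F]_#|P|) = #|P|.
  apply: mxrank_unit; rewrite unitmxE det_scalar unitfE expf_neq0 //.
rewrite -AB; apply: leq_trans (mxrankM_maxl _ _) (rank_leq_col _).
Qed.

Section S.
Variables (F : fieldType) (gT : finGroupType) (G : {group gT}).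

Lemma lc_unit {rho : gT -> F} : lin_char G rho -> forall g, g \in G -> rho g \is a GRing.unit.
Proof. by case=> _ nz g Hg; rewrite unitfE nz. Qed.

Lemma lc1 {rho : gT -> F} : lin_char G rho -> rho 1%g = 1.
Proof.
case=> M nz; have := M 1%g 1%g (group1 G) (group1 G); rewrite mulg1 => h.
by apply: (mulIf (nz _ (group1 G))); rewrite mul1r -h.
Qed.

Lemma lcX {rho : gT -> F} k g : lin_char G rho -> g \in G -> rho (g ^+ k)%g = rho g ^+ k.
Proof.
move=> ch Hg; elim: k => [|k IH]; first by rewrite expg0 expr0 (lc1 ch).
by rewrite expgS exprS ch.1 ?groupX // IH.
Qed.

Lemma lc_card {rho : gT -> F} g : lin_char G rho -> g \in G -> rho g ^+ #|G| = 1.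
Proof. by move=> ch Hg; rewrite -(lcX _ _ ch) // expg_cardG // (lc1 ch). Qed.

Variables (rho1 rho2 : gT -> F) (ch1 : lin_char G rho1) (ch2 : lin_char G rho2).

Definition inL (x y : int) := {in G, forall g, rho1 g ^ x * rho2 g ^ y = 1}.

Lemma inL_lin (x y x' y' m k : int) : inL x y -> inL x' y' -> inL (x * m + x' * k) (y * m + y' * k).
Proof.
move=> H H' g Hg; have u1 := lc_unit ch1 _ Hg; have u2 := lc_unit ch2 _ Hg.
rewrite !exprzDr // -!exprz_exp mulrACA -exprzMl ?unitrXz //.
by rewrite -exprzMl ?unitrXz // H // H' // !exp1rz mulr1.
Qed.

Lemma inL_n0 : inL #|G| 0.
Proof. by move=> g Hg; rewrite expr0z mulr1 -exprnP (lc_card _ ch1). Qed.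
Lemma inL_0n : inL 0 #|G|.
Proof. by move=> g Hg; rewrite expr0z mul1r -exprnP (lc_card _ ch2). Qed.

Lemma exa : exists n, (0 < n)%N && pb (exists y, inL n%:Z y).
Proof. exists #|G|; rewrite cardG_gt0; apply/pbP; exists 0; exact: inL_n0. Qed.
Lemma exc : exists n, (0 < n)%N && pb (inL 0 n%:Z).
Proof. exists #|G|; rewrite cardG_gt0; apply/pbP; exact: inL_0n. Qed.

Definition La := ex_minn exa.
Definition Lc := ex_minn exc.

Lemma La_spec : [/\ (0 < La)%N, exists t, inL La t &
   forall n y, (0 < n)%N -> inL n%:Z y -> (La <= n)%N].
Proof.
rewrite /La; case: ex_minnP => a /andP[a0 /pbP [t Ht]] amin; split => //.
  by exists t.
by move=> n y n0 Hy; apply: amin; rewrite n0; apply/pbP; exists y.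
Qed.

Lemma Lc_spec : [/\ (0 < Lc)%N, inL 0 Lc &
   forall n, (0 < n)%N -> inL 0 n%:Z -> (Lc <= n)%N].
Proof.
rewrite /Lc; case: ex_minnP => c /andP[c0 /pbP Hc] cmin; split => //.
by move=> n n0 Hn; apply: cmin; rewrite n0; apply/pbP.
Qed.

Lemma exLt : exists t, pb (inL La t).
Proof. by case: La_spec => _ [t Ht] _; exists t; apply/pbP. Qed.
Definition Lt := xchoose exLt.
Lemma Lt_spec : inL La Lt.
Proof. exact/pbP/(xchooseP exLt). Qed.

Lemma inL_decomp (x y : int) : inL x y -> exists q s : int, x = q * La%:Z /\ y = q * Lt + s * Lc%:Z.
Proof.
move=> H; case: La_spec => a0 _ amin; case: Lc_spec => c0 Hc cmin.
set q := (x %/ La)%Z.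
have Hr := inL_lin _ _ _ _ 1 (- q) H Lt_spec.
have E : x * 1 + La%:Z * (- q) = (x %% La)%Z.
  by rewrite {1}(divz_eq x La) -/q; ring.
rewrite E in Hr.
have ge : (0 <= (x %% La)%Z) by apply: modz_ge0; lia.
have lt : ((x %% La)%Z < La) by apply: ltz_pmod; lia.
have r0 : (x %% La)%Z = 0.
  move: Hr ge lt; case: (x %% La)%Z => [[|r]|r] Hr' ge' lt' //.
  by have := amin r.+1 _ (ltn0Sn _) Hr'; lia.
set y' := y * 1 + Lt * (- q).
set s := (y' %/ Lc)%Z.
have Hs := inL_lin _ _ _ _ 1 (- s) Hr Hc.
rewrite r0 in Hs.
have E2 : y' * 1 + Lc%:Z * (- s) = (y' %% Lc)%Z.
  by rewrite {1}(divz_eq y' Lc) -/s; ring.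
rewrite E2 !mul0r add0r in Hs.
have ge2 : (0 <= (y' %% Lc)%Z) by apply: modz_ge0; lia.
have lt2 : ((y' %% Lc)%Z < Lc) by apply: ltz_pmod; lia.
have r1 : (y' %% Lc)%Z = 0.
  move: Hs ge2 lt2; case: (y' %% Lc)%Z => [[|r]|r] Hr' ge' lt' //.
  by have := cmin r.+1 (ltn0Sn _) Hr'; lia.
exists q, s; split.
  by rewrite {1}(divz_eq x La) r0 addr0.
have := divz_eq y' Lc; rewrite r1 addr0 -/s /y' => E3.
have -> : y = (y * 1 + Lt * - q) + q * Lt by ring.
by rewrite E3; ring.
Qed.

Lemma geo (v : F) n : v ^+ n = 1 -> \sum_(i < n) v ^+ i = if v == 1 then n%:R else 0.
Proof.
move=> H; case: eqP => [->|ne].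
  by under eq_bigr do rewrite expr1n; rewrite sumr_const card_ord.
have := subrX1 v n; rewrite H subrr => /esym/eqP.
by rewrite mulf_eq0 subr_eq0 (negbTE (introN eqP ne)) /= => /eqP.
Qed.

Hypothesis sep : {in G &, forall g h, rho1 g = rho1 h -> rho2 g = rho2 h -> g = h}.
Hypothesis charF0 : [pchar F] =i pred0.

Lemma count1 : (#|G| <= La * Lc)%N.
Proof.
have := @card_le_orth F gT ('I_La * 'I_Lc)%type G predT
  (fun g p => rho1 g ^+ p.1 * rho2 g ^+ p.2)
  (fun p h => (rho1 h ^+ p.1 * rho2 h ^+ p.2)^-1) (La * Lc)%:R.
move/pcharf0P: charF0 => c0.
case: La_spec => a0 _ _; case: Lc_spec => cc0 Hc _.
rewrite card_prod !card_ord; apply; first by rewrite c0 muln_eq0 negb_or -!lt0n a0 cc0.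
move=> g h Hg Hh.
have n1g := (ch1.2 g Hg); have n1h := (ch1.2 h Hh).
have n2g := (ch2.2 g Hg); have n2h := (ch2.2 h Hh).
set U := rho1 g / rho1 h; set V := rho2 g / rho2 h.
under eq_bigr => p _ do rewrite -[_ / _]/(_ * (_ * _)^-1) invfM mulrACA -!exprVn -!exprMn -/U -/V.
have -> : \sum_(p in predT) U ^+ (p : 'I_La * 'I_Lc).1 * V ^+ p.2 = \sum_(x < La) \sum_(y < Lc) U ^+ x * V ^+ y.
  by rewrite pair_big; apply: eq_bigl.
rewrite -big_distrlr /=.
have Vc : V ^+ Lc = 1.
  have := Hc g Hg; have := Hc h Hh; rewrite !expr0z !mul1r /= => e1 e2.
  by rewrite /V expr_div_n !exprnP e1 e2 divr1.
rewrite (geo _ _ Vc).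
have [V1|Vn1] := eqVneq V 1; last first.
  rewrite mulr0; case: eqVneq => [e|]; last by rewrite mul0r.
  by move: Vn1; rewrite /V e divff ?eqxx.
have e2 : rho2 g = rho2 h by apply: divr1_eq.
have Ua : U ^+ La = 1.
  have := Lt_spec g Hg; have := Lt_spec h Hh; rewrite e2 /= => e3 e4.
  have : rho1 g ^+ La = rho1 h ^+ La.
    apply: (mulIf (x := rho2 h ^ Lt)); first by rewrite -unitfE unitrXz // unitfE.
    by rewrite e3 e4.
  by rewrite /U expr_div_n => ->; rewrite divff // expf_neq0.
rewrite (geo _ _ Ua).
have [U1|Un1] := eqVneq U 1; last first.
  rewrite mul0r; case: eqVneq => [e|]; last by rewrite mul0r.
  by move: Un1; rewrite /U e divff ?eqxx.
have e1 : rho1 g = rho1 h by apply: divr1_eq.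
by rewrite (sep _ _ Hg Hh e1 e2) !eqxx mul1r natrM.
Qed.

Lemma count2 : (La * Lc <= #|G|)%N.
Proof.
move/pcharf0P: charF0 => c0.
have := @card_le_orth F ('I_La * 'I_Lc)%type gT predT G
  (fun p g => (rho1 g ^+ p.1 * rho2 g ^+ p.2)^-1)
  (fun g p => rho1 g ^+ p.1 * rho2 g ^+ p.2) #|G|%:R.
rewrite card_prod !card_ord; apply; first by rewrite c0 -lt0n cardG_gt0.
move=> p p' _ _.
have nz g : g \in G -> rho1 g ^+ p.1 * rho2 g ^+ p.2 != 0.
  by move=> Hg; rewrite mulf_neq0 // expf_neq0 // ?(ch1.2 g Hg) ?(ch2.2 g Hg).
case: (p =P p') => [<-|ne].
  rewrite ?eqxx mul1r (eq_bigr (fun _ => 1)); last by move=> g Hg; rewrite mulVf // nz.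
  by rewrite sumr_const.
rewrite mul0r.
pose psi g := rho1 g ^ (p'.1%:Z - p.1%:Z) * rho2 g ^ (p'.2%:Z - p.2%:Z).
rewrite (eq_bigr psi); last first.
  move=> g Hg; have u1 := lc_unit ch1 _ Hg; have u2 := lc_unit ch2 _ Hg.
  rewrite /psi !exprzDr // -!invr_expz -!exprnP invfM mulrACA.
  by rewrite [_^-1 * _]mulrC [(rho2 g ^+ _)^-1 * _]mulrC.
have psiM : {in G &, forall g h, psi (g * h)%g = psi g * psi h}.
  move=> g h Hg Hh; rewrite /psi ch1.1 // ch2.1 //.
  rewrite !exprzMl ?(lc_unit ch1) ?(lc_unit ch2) //.
  by rewrite mulrACA.
have [h Hh psih] : exists2 h, h \in G & psi h != 1.
  case: (excluded_middle_informative (exists2 h, h \in G & psi h != 1)) => // nex.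
  have HL : inL (p'.1%:Z - p.1%:Z) (p'.2%:Z - p.2%:Z).
    move=> g Hg; apply/eqP; apply/negPn/negP => hn; apply: nex; exists g => //.
  have [q [s [e1 e2]]] := inL_decomp _ _ HL.
  case: La_spec => a0 _ _; case: Lc_spec => cc0 _ _.
  exfalso; apply: ne; clearbody psi; clear nz HL.
  case: p p' e1 e2 => [x y] [x' y'] /= e1 e2.
  have lx := ltn_ord x; have lx' := ltn_ord x'.
  have ly := ltn_ord y; have ly' := ltn_ord y'.
  have q0 : q = 0 by nia.
  rewrite q0 mul0r add0r in e2.
  have s0 : s = 0 by nia.
  rewrite q0 mul0r in e1; rewrite s0 mul0r in e2.
  congr pair; apply: val_inj => /=; lia.
set S := \sum_(g in G) psi g.
have ES : S = psi h * S.
  rewrite {1}/S (reindex_inj (mulgI h)) /=.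
  rewrite (eq_bigl (fun g => g \in G)); last by move=> g; rewrite groupMl.
  rewrite /S mulr_sumr; apply: eq_bigr => g Hg; exact: (psiM _ _ Hh Hg).
apply/eqP; move: ES => /eqP; rewrite -subr_eq0 -{1}[S]mul1r -mulrBl mulf_eq0 subr_eq0.
by rewrite eq_sym (negbTE psih).
Qed.
End S.

Theorem proposition6p5
  (F : closedFieldType) (charF0 : [pchar F] =i pred0)
  (gT : finGroupType) (G : {group gT}) (abG : abelian G)
  (rG : mx_representation F G 3) (faithG : mx_faithful rG)
  (detG : {in G, forall g, \det (rG g) = 1})
  (rho1 rho2 rho3 : gT -> F)
  (ch1 : lin_char G rho1) (ch2 : lin_char G rho2) (ch3 : lin_char G rho3)
  (P : 'M[F]_3) (Punit : P \in unitmx)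
  (decomp : {in G, forall g, P *m rG g *m invmx P = diag3 (rho1 g) (rho2 g) (rho3 g)}) :
  (exists B : 'M[int]_2, col_kills G rho1 rho2 B /\ \det B = (#|G|)%:Z) /\
  (forall B B' : 'M[int]_2,
      col_kills G rho1 rho2 B -> \det B = (#|G|)%:Z ->
      col_kills G rho1 rho2 B' -> \det B' = (#|G|)%:Z ->
      exists M : 'M[int]_2, \det M = 1 /\ B' = B *m M).

Proof.
have detP : \det P != 0 by rewrite -unitfE -unitmxE.
have prod3 g : g \in G -> rho1 g * rho2 g * rho3 g = 1.
  move=> Hg; rewrite -(detG _ Hg).
  have -> : \det (rG g) = \det (P *m rG g *m invmx P).
    by rewrite !det_mulmx det_inv [\det P * _]mulrC -mulrA divff // mulr1.
  by rewrite decomp // /diag3 det_diag !big_ord_recr big_ord0 !mxE /= mul1r.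
have sep : {in G &, forall g h, rho1 g = rho1 h -> rho2 g = rho2 h -> g = h}.
  move=> g h Hg Hh e1 e2.
  have e3 : rho3 g = rho3 h.
    apply: (mulrI (x := rho1 g * rho2 g)).
      by rewrite unitfE mulf_neq0 // ?(ch1.2 g Hg) ?(ch2.2 g Hg).
    by rewrite prod3 // e1 e2 prod3.
  apply: (mx_faithful_inj faithG Hg Hh).
  have := decomp _ Hg; rewrite e1 e2 e3 -(decomp _ Hh).
  move/(congr1 (mulmx^~ P)); rewrite !mulmxKV //.
  by move/(congr1 (mulmx (invmx P))); rewrite !mulKmx.
set a := La F gT G rho1 rho2 ch1; set c := Lc F gT G rho1 rho2 ch2.
set t := Lt F gT G rho1 rho2 ch1.
have ac : (a * c)%N = #|G| by apply/eqP; rewrite eqn_leq count2 // count1.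
have Ht : inL F gT G rho1 rho2 a t := Lt_spec _ _ _ _ _ ch1.
have Hc : inL F gT G rho1 rho2 0 c by case: (Lc_spec F gT G rho1 rho2 ch2).
pose B0 : 'M[int]_2 := \matrix_(i, j) (if i == 0 then (if j == 0 then a%:Z else 0)
   else (if j == 0 then t else c%:Z)).
have dB0 : \det B0 = #|G|%:Z.
  rewrite det_trig; last by apply/is_trig_mxP => -[[|[|//]] Hi] [[|[|//]] Hj] //=; rewrite mxE.
  by rewrite !big_ord_recr big_ord0 /= !mxE /= mul1r -ac.
have i01 (i : 'I_2) : i = 0 \/ i = 1.
  by case: i => [[|[|//]] H]; [left|right]; apply: val_inj.
split.
  exists B0; split=> // j g Hg.
  by case: (i01 j) => ->; rewrite !mxE /=; [apply: Ht | apply: Hc].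
have dec (B : 'M[int]_2) : col_kills G rho1 rho2 B -> exists M1 : 'M[int]_2, B = B0 *m M1.
  move=> HB.
  have [q0 [s0 [e00 e10]]] := inL_decomp _ _ _ _ _ ch1 ch2 _ _ (HB 0).
  have [q1 [s1 [e01 e11]]] := inL_decomp _ _ _ _ _ ch1 ch2 _ _ (HB 1).
  exists (\matrix_(i, j) if i == 0 then (if j == 0 then q0 else q1)
                        else (if j == 0 then s0 else s1)).
  apply/matrixP => i j; rewrite !mxE !big_ord_recr big_ord0 /= !mxE.
  case: (i01 i) => ->; case: (i01 j) => -> /=; rewrite ?mxE /=.
  - by rewrite e00; ring.
  - by rewrite e01; ring.
  - by rewrite e10; ring.
  - by rewrite e11; ring.
move=> B B' HB dB HB' dB'.
have [M1 E1] := dec B HB; have [M2 E2] := dec B' HB'.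
have n0 : #|G|%:Z != 0 by have := cardG_gt0 G; lia.
have d1 : \det M1 = 1.
  move/eqP: dB; rewrite E1 det_mulmx dB0 -{2}[#|G|%:Z]mulr1 (inj_eq (mulfI n0)).
  by move/eqP.
have d2 : \det M2 = 1.
  move/eqP: dB'; rewrite E2 det_mulmx dB0 -{2}[#|G|%:Z]mulr1 (inj_eq (mulfI n0)).
  by move/eqP.
exists (\adj M1 *m M2); split.
  have : \det (M1 *m (\adj M1 *m M2)) = \det M2 by rewrite mulmxA mul_mx_adj d1 mul1mx.
  by rewrite det_mulmx d1 mul1r d2.
by rewrite E1 E2 -mulmxA [M1 *m _]mulmxA mul_mx_adj d1 mul1mx.
Qed.
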